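(* Let $\mathbf{F}$ be a finite field with $q$ elements, $n\ge1$, $V_j=\operatorname{span}(b_1,\dots,b_j)\subseteq\mathbf{F}^n$ for the standard basis, and $r\ge0$. Let $T\colon V_{n-1}\to V_{n-1}$ be a semi-idempotent linear map of rank $\le r$. For $f\colon\mathbf{Z}_{\ge0}\to\mathbf{Z}$ put \[ E_n(f,T)=\sum_{\substack{S\colon V_n\to V_n\ \text{semi-idempotent}\\ \operatorname{rank}S\le r,\ S|_{V_{n-1}}=T}}\mu(\mathrm{srk}\,S)\,f(\operatorname{rank}S), \] where $S|_{V_{n-1}}=T$ means $S(v)=T(v)$ for all $v\in V_{n-1}$. Then (1) if $\operatorname{rank}T\le r-1$, $E_n(f,T)=\mu(\mathrm{srk}\,T)\,q^{\operatorname{rank}T}\big(f(\operatorname{rank}T)-f(\operatorname{rank}T+1)\big)$; (2) if $\operatorname{rank}T=r$, $E_n(f,T)=\mu(\mathrm{srk}\,T)\,q^{\operatorname{rank}T}f(\operatorname{rank}T)$.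
   Context: A linear operator $S$ on a finite-dimensional space $V$ is semi-idempotent if $V=X\oplus Y$ with $X,Y$ $S$-stable, $S|_X=\mathrm{id}$ and $S|_Y$ nilpotent. $\mathrm{srk}$ is the stable rank: rank of the $j$-th power for $j\gg0$. $\mu(i)=(-1)^iq^{\binom i2}$. *)

(* Defs.v *)
From HB Require Import structures.
From mathcomp Require Import all_boot all_order all_algebra.
From mathcomp Require Import boolp.
Set Implicit Arguments. Unset Strict Implicit. Unset Printing Implicit Defensive.
Import GRing.Theory Num.Theory.
Local Open Scope ring_scope.

(* Linear maps on F^n are matrices acting on row vectors: v |-> v *m S. *)

(* S is semi-idempotent: F^n = X (+) Y with X, Y S-stable, S = id on X,
   S nilpotent on Y.  Subspaces are row spaces of square matrices. *)
Definition semi_idempotent (F : fieldType) (n : nat) (S : 'M[F]_n) : Prop :=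
  exists X Y : 'M[F]_n,
    [/\ (X + Y == 1%:M)%MS /\ mxdirect (X + Y), stablemx X S, stablemx Y S,
        (forall v : 'rV[F]_n, (v <= X)%MS -> v *m S = v) &
        exists k : nat, forall v : 'rV[F]_n, (v <= Y)%MS -> v *m S ^+ k = 0].

(* stable rank: rank of S^j for j >> 0; the ranks stabilize by j = n *)
Definition srk (F : fieldType) (n : nat) (S : 'M[F]_n) : nat := \rank (S ^+ n).

Definition mu (q i : nat) : int := (-1) ^+ i * (q ^ 'C(i, 2))%:Z.

Definition restricts_to (F : fieldType) (m : nat) (S : 'M[F]_(m + 1)) (T : 'M[F]_m)
  : Prop :=
  forall v : 'rV[F]_m, row_mx v (0 : 'rV[F]_1) *m S = row_mx (v *m T) 0.

(* E_n(f,T) with n = m + 1 *)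
Definition E_sum (F : finFieldType) (m r : nat) (f : nat -> int) (T : 'M[F]_m) : int :=
  \sum_(S : 'M[F]_(m + 1) |
          `[< semi_idempotent S /\ (\rank S <= r)%N /\ restricts_to S T >])
     mu #|F| (srk S) * f (\rank S).

(* Main.v *)
Require Import Defs.
From HB Require Import structures.
From mathcomp Require Import all_boot all_order all_algebra.
From mathcomp Require Import boolp.
From mathcomp Require Import zify ring mxabelem.
Set Warnings "-notation-overridden -ambiguous-paths".
Set Implicit Arguments. Unset Strict Implicit. Unset Printing Implicit Defensive.
Import GRing.Theory Num.Theory.
Local Open Scope ring_scope.

Section Stab.
Variables (F : fieldType) (n : nat) (A : 'M[F]_n).

Lemma chain_sub j : (A ^+ j.+1 <= A ^+ j)%MS.
Proof. by rewrite exprS -mulmxE submxMl. Qed.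

Lemma chain_eq_step j : (A ^+ j <= A ^+ j.+1)%MS -> (A ^+ j.+1 <= A ^+ j.+2)%MS.
Proof.
move=> h; rewrite [A ^+ j.+1]exprSr [A ^+ j.+2]exprSr -!mulmxE.
exact: submxMr.
Qed.

Lemma chain_eq_le j i : (j <= i)%N -> (A ^+ j <= A ^+ j.+1)%MS -> (A ^+ i <= A ^+ i.+1)%MS.
Proof.
move=> /subnK <-; elim: (i - j)%N => [|d IH] h //.
by rewrite addSn; apply: chain_eq_step; apply: IH.
Qed.

Lemma chain_exists : exists2 j, (j <= n)%N & (A ^+ j <= A ^+ j.+1)%MS.
Proof.
case: (boolP [exists j : 'I_n.+1, (A ^+ j <= A ^+ j.+1)%MS]).
  by case/existsP=> j h; exists j => //; rewrite -ltnS.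
rewrite negb_exists => /forallP hn.
have key : forall j, (j <= n.+1)%N -> (\rank (A ^+ j) + j <= n)%N.
  elim=> [|j IH] hj; first by rewrite expr0 addn0 mxrank1.
  have hj' : (j < n.+1)%N by [].
  have := hn (Ordinal hj'); rewrite /= => hnot.
  have lt : (A ^+ j.+1 < A ^+ j)%MS by rewrite ltmxE chain_sub hnot.
  move: lt; rewrite ltmxErank => /andP[_ lt].
  have := IH (ltnW hj); rewrite addnS; move: lt; clear; lia.
by have := key n.+1 (leqnn _); lia.
Qed.

Lemma pow_stab k : A ^+ k.+1 = A ^+ k -> A ^+ n.+1 = A ^+ n.
Proof.
move=> hk.
have hK : forall i, (k <= i)%N -> A ^+ i.+1 = A ^+ i.
  move=> i /subnK <-; elim: (i - k)%N => [|d IH] //.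
  by rewrite addSn exprS IH -exprS.
case: chain_exists => j jn hj.
have hn := @chain_eq_le j n jn hj.
have hsub : forall d, (A ^+ n <= A ^+ (n + d))%MS.
  elim=> [|d IH]; first by rewrite addn0.
  apply: submx_trans IH _; rewrite addnS.
  by apply: (@chain_eq_le n) hn; rewrite leq_addr.
have /submxP [D hD] := hsub k.
rewrite exprSr hD mulmxE -mulrA -exprSr hK //; last by rewrite leq_addl.
Qed.

End Stab.

Section Semi.
Variables (F : fieldType) (n : nat).

Lemma semiP (S : 'M[F]_n) : semi_idempotent S <-> S ^+ n.+1 = S ^+ n.
Proof.
split.
  case=> X [Y [[hfull hdir] sX sY hid [k hk]]].
  apply: (@pow_stab _ _ _ k); apply/row_matrixP => i; rewrite !rowE.
  have : ((delta_mx 0 i : 'rV[F]_n) <= X + Y)%MS.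
    by case/andP: hfull => _ h; exact: submx_trans (submx1 _) h.
  case/sub_addsmxP=> u ->.
  have hx : forall j, u.1 *m X *m S ^+ j = u.1 *m X.
    elim=> [|j IH]; first by rewrite expr0 mulmx1.
    by rewrite exprS -mulmxE mulmxA hid ?submxMl // IH.
  have hy : u.2 *m Y *m S ^+ k = 0 by apply: hk; rewrite submxMl.
  rewrite !mulmxDl !hx exprSr -mulmxE mulmxA hy mul0mx.
  by [].
move=> hP; set P := S ^+ n.
have hfix : forall v : 'rV_n, (v <= P)%MS -> v *m S = v.
  by move=> v /submxP [w ->]; rewrite -mulmxA mulmxE -exprSr hP.
have hcap : (P :&: kermx P)%MS = 0.
  set Z := (P :&: kermx P)%MS.
  have hZP : Z *m P = 0 by apply/sub_kermxP; apply: capmxSr.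
  have hZS : Z *m S = Z.
    have /submxP [w hw] : (Z <= P)%MS by apply: capmxSl.
    by rewrite hw -mulmxA mulmxE -exprSr hP.
  have hZj : forall j, Z *m S ^+ j = Z.
    elim=> [|j IH]; first by rewrite expr0 mulmx1.
    by rewrite exprSr -mulmxE mulmxA IH hZS.
  by rewrite -hZP hZj.
exists P, (kermx P); split.
- split; last by rewrite mxdirect_addsE /= !mxdirect_trivial hcap eqxx.
  have := (mxrank_leqif_eq (submx1 (P + kermx P)%MS)).2.
  move=> <-; rewrite mxrank1.
  have := mxrank_sum_cap P (kermx P); rewrite hcap mxrank0 addn0 mxrank_ker => ->.
  by rewrite subnKC ?rank_leq_row.
- have -> : P *m S = P by rewrite /P mulmxE -exprSr; exact: hP.
  by [].
- apply/sub_kermxP.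
  rewrite -mulmxA; have -> : S *m P = P *m S by rewrite /P !mulmxE -exprS exprSr.
  by rewrite mulmxA mulmx_ker mul0mx.
- exact: hfix.
- by exists n => v /sub_kermxP.
Qed.

Lemma semiP' (S : 'M[F]_n) N : (n <= N)%N ->
  semi_idempotent S <-> S ^+ N.+1 = S ^+ N.
Proof.
move=> hN; rewrite semiP; split; last exact: pow_stab.
move=> h; move: hN => /subnK <-; elim: (N - n)%N => [|d IH] //.
by rewrite addSn exprS IH -exprS.
Qed.

End Semi.

Lemma expE (R : pzSemiRingType) (x : R) a b : a = b -> x ^+ a = x ^+ b.
Proof. by move=> ->. Qed.

Section Block.
Variables (F : fieldType) (m : nat) (T : 'M[F]_m).

Definition blk (b : 'rV[F]_m) (c : F) : 'M[F]_(m + 1) := block_mx T 0 b c%:M.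

Lemma sm0 p : ((0 : F)%:M : 'M_p) = 0.
Proof. by apply/matrixP=> i j; rewrite !mxE mul0rn. Qed.

Lemma blk_restr b c : restricts_to (blk b c) T.
Proof. by move=> v; rewrite /blk mul_row_block !mul0mx !mulmx0 !addr0. Qed.

Lemma restr_blk S : restricts_to S T -> S = blk (dlsubmx S) (drsubmx S 0 0).
Proof.
move=> h; rewrite /blk -mx11_scalar -[LHS]submxK; congr block_mx.
  apply/row_matrixP=> i; rewrite !rowE.
  have := h 'e_i; rewrite -{1}[S]submxK mul_row_block !mul0mx !addr0.
  by case/eq_row_mx.
apply/row_matrixP=> i; rewrite !rowE mulmx0.
have := h 'e_i; rewrite -{1}[S]submxK mul_row_block !mul0mx !addr0.
by case/eq_row_mx.
Qed.

Lemma blk_pow0 b j :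
  blk b 0 ^+ j.+1 = block_mx (T ^+ j.+1) 0 (b *m T ^+ j) 0.
Proof.
elim: j => [|j IH]; first by rewrite expr1 expr0 mulmx1 /blk sm0.
rewrite exprSr IH /blk sm0 -mulmxE mulmx_block.
by rewrite !mul0mx !mulmx0 !addr0 -mulmxA !mulmxE -!exprSr.
Qed.

Lemma blk_pow1 b j :
  blk b 1 ^+ j = block_mx (T ^+ j) 0 (b *m \sum_(i < j) T ^+ i) 1%:M.
Proof.
elim: j => [|j IH].
  by rewrite !expr0 big_ord0 mulmx0; exact: (scalar_mx_block m 1 (1 : F)).
rewrite exprSr IH /blk -mulmxE mulmx_block.
rewrite !mul0mx !mulmx0 !mul1mx !addr0 add0r mulmxE -exprSr; congr block_mx.
rewrite big_ord_recl expr0 mulmxDr mulmx1 addrC; congr (_ + _).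
rewrite -mulmxA mulmxE mulr_suml; congr (_ *m _).
by apply: eq_bigr => i _; rewrite -exprSr.
Qed.

Lemma blk_powc b c j : exists P, blk b c ^+ j = block_mx (T ^+ j) 0 P (c ^+ j)%:M.
Proof.
elim: j => [|j [P IH]].
  by exists 0; rewrite !expr0; exact: (scalar_mx_block m 1 (1 : F)).
exists (P *m T + (c ^+ j)%:M *m b).
rewrite exprSr IH /blk -mulmxE mulmx_block.
rewrite !mul0mx !mulmx0 !addr0 mulmxE -exprSr; congr block_mx.
by rewrite add0r -scalar_mxM exprSr.
Qed.

End Block.

Section Rank.
Variables (F : fieldType) (m : nat).

Lemma rank_b0 p (X : 'M[F]_(p, m)) (Y : 'rV[F]_m) :
  \rank (block_mx X 0 Y (0 : 'M_1)) = (\rank X + ~~ (Y <= X)%MS)%N.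
Proof.
rewrite block_mxEh col_mx0 rank_row_mx0 -addsmxE.
case: (boolP (Y <= X)%MS) => hY.
  by rewrite addn0 (addsmx_idPl hY).
rewrite addn1; apply/eqP; rewrite eqn_leq; apply/andP; split.
  apply: leq_trans (mxrank_adds_leqif X Y) _.
  by rewrite -[(\rank X).+1]addn1 leq_add2l rank_leq_row.
have : (X < X + Y)%MS by rewrite ltmxE addsmxSl addsmx_sub submx_refl.
by rewrite ltmxErank => /andP[].
Qed.

Lemma rank_b1 (X : 'M[F]_m) (Y : 'rV[F]_m) :
  \rank (block_mx X 0 Y (1%:M : 'M_1)) = (\rank X).+1.
Proof.
have -> : block_mx X 0 Y (1%:M : 'M_1) =
   block_mx X 0 0 (1%:M : 'M_1) *m block_mx (1%:M : 'M_m) 0 Y (1%:M : 'M_1).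
  by rewrite mulmx_block !mul0mx !mulmx0 !mulmx1 !mul1mx !addr0 !add0r.
rewrite mxrankMfree ?rank_diag_block_mx ?mxrank1 ?addn1 //.
by rewrite row_free_unit unitmxE det_lblock !det1 mulr1 unitr1.
Qed.

End Rank.

Section Class.
Variables (F : fieldType) (m : nat) (T : 'M[F]_m).
Hypothesis hT : T ^+ m.+1 = T ^+ m.

Lemma semi_blk0 b : semi_idempotent (blk T b 0).
Proof.
apply/(semiP' _ (eq_leq (addn1 m))); rewrite !blk_pow0; congr block_mx.
  by rewrite exprS hT -exprS.
by rewrite hT.
Qed.

Lemma semi_blk1 b : semi_idempotent (blk T b 1) <-> b *m T ^+ m = 0.
Proof.
split.
  move/(semiP' _ (eq_leq (addn1 m))); rewrite !blk_pow1 => /eq_block_mx [_ _ h _].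
  move: h; rewrite [X in b *m X = _]big_ord_recr /= mulmxDr.
  by rewrite -[RHS]addr0 => /addrI; rewrite hT.
move=> hb; apply/(semiP' _ (eq_leq (addn1 m))); rewrite !blk_pow1; congr block_mx.
  by rewrite exprS hT -exprS.
by rewrite [in LHS]big_ord_recr /= mulmxDr hT hb addr0.
Qed.

Lemma nsemi_blk b c : c != 0 -> c != 1 -> ~ semi_idempotent (blk T b c).
Proof.
move=> c0 c1 /semiP.
case: (blk_powc T b c (m + 1).+1) => P1 ->.
case: (blk_powc T b c (m + 1)) => P2 ->.
case/eq_block_mx => _ _ _ h.
have := congr1 (fun M : 'M_1 => M 0 0) h; rewrite !mxE /= !mulr1n => /eqP.
rewrite exprSr -subr_eq0 -{2}[c ^+ _]mulr1 -mulrBr mulf_eq0 expf_eq0.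
by rewrite subr_eq0 (negbTE c0) (negbTE c1) andbF.
Qed.

Lemma rank_blk0 b : \rank (blk T b 0) = (\rank T + ~~ (b <= T)%MS)%N.
Proof. by rewrite /blk sm0 rank_b0. Qed.

Lemma rank_blk1 b : \rank (blk T b 1) = (\rank T).+1.
Proof. by rewrite /blk rank_b1. Qed.

Lemma srk_blk0 b : srk (blk T b 0) = srk T.
Proof.
rewrite /srk (expE _ (addn1 m)) blk_pow0 rank_b0 hT.
by rewrite submxMl addn0.
Qed.

Lemma srk_blk1 b : srk (blk T b 1) = (srk T).+1.
Proof. by rewrite /srk (expE _ (addn1 m)) blk_pow1 rank_b1 hT. Qed.

End Class.

Unset Implicit Arguments.
Unset Strict Implicit.

Theorem proposition3p5 (F : finFieldType) (m r : nat) (T : 'M[F]_m)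
  (f : nat -> int) :
  semi_idempotent T -> (\rank T <= r)%N ->
  ((\rank T < r)%N ->
     E_sum r f T = mu #|F| (srk T) * (#|F| ^ \rank T)%:Z
                   * (f (\rank T) - f (\rank T).+1)) /\
  (\rank T = r ->
     E_sum r f T = mu #|F| (srk T) * (#|F| ^ \rank T)%:Z * f (\rank T)).
Proof.
move=> hsemi hr.
have hT : T ^+ m.+1 = T ^+ m by apply/semiP.
set w := fun S : 'M[F]_(m + 1) => mu #|F| (srk S) * f (\rank S).
set G := fun (b : 'rV[F]_m) (c : F) =>
  if `[< semi_idempotent (blk T b c) /\ (\rank (blk T b c) <= r)%N /\ restricts_to (blk T b c) T >]
  then w (blk T b c) else 0.
have E1 : E_sum r f T = \sum_(c : F) \sum_(b : 'rV[F]_m) G b c.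
  rewrite /E_sum (reindex_onto (fun x : 'rV[F]_m * F => blk T x.1 x.2)
                   (fun S => (dlsubmx S, drsubmx S 0 0))) /=; last first.
    by move=> S /asboolP [_ [_ h]]; rewrite -restr_blk.
  rewrite exchange_big pair_big /=.
  rewrite big_mkcond; apply: eq_bigr => [[b c]] _ /=.
  have -> : (dlsubmx (blk T b c), drsubmx (blk T b c) 0 0) = (b, c).
    by rewrite /blk block_mxKdl block_mxKdr mxE eqxx mulr1n.
  by rewrite eqxx andbT.
have G0 : forall b, G b 0 = if (\rank T + ~~ (b <= T)%MS <= r)%N
                            then mu #|F| (srk T) * f (\rank T + ~~ (b <= T)%MS) else 0.
  move=> b; rewrite /G /w rank_blk0 srk_blk0 //.
  case: (boolP (\rank T + ~~ (b <= T)%MS <= r)%N) => h.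
    by rewrite asboolT //; split; [exact: semi_blk0 | split; [|exact: blk_restr]].
  by rewrite asboolF // => -[_ []].
have G1 : forall b, G b 1 = if (b *m T ^+ m == 0) && ((\rank T).+1 <= r)%N
                  then mu #|F| (srk T).+1 * f (\rank T).+1 else 0.
  move=> b; rewrite /G /w rank_blk1 srk_blk1 //.
  case: (boolP (b *m T ^+ m == 0)) => hb /=; case: (boolP ((\rank T).+1 <= r)%N) => h /=.
  - rewrite asboolT //; split; first by apply/(semi_blk1 hT); exact/eqP.
    by split; [|exact: blk_restr].
  - by rewrite asboolF // => -[_ []].
  - by rewrite asboolF // => -[hs _]; move/(semi_blk1 hT)/eqP: hs; rewrite (negbTE hb).
  - by rewrite asboolF // => -[hs _]; move/(semi_blk1 hT)/eqP: hs; rewrite (negbTE hb).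
have Gc : forall b c, c != 0 -> c != 1 -> G b c = 0.
  by move=> b c c0 c1; rewrite /G asboolF // => -[hs _]; move: hs; apply: nsemi_blk.
have E2 : E_sum r f T = \sum_b G b 0 + \sum_b G b 1.
  rewrite E1 (bigD1 (0 : F)) //= (bigD1 (1 : F)) /=; last by rewrite oner_neq0.
  rewrite [X in _ + (_ + X)]big1 ?addr0 // => c /andP[c1 c0]; apply: big1 => b _; exact: Gc.
have S0 : \sum_b G b 0 = (mu #|F| (srk T) * f (\rank T)) *+ (#|F| ^ \rank T)
   + (if (\rank T < r)%N then mu #|F| (srk T) * f (\rank T).+1 else 0)
       *+ (#|F| ^ m - #|F| ^ \rank T).
  rewrite (bigID (fun b => (b <= T)%MS)) /=.
  have e0 : f (\rank T + ~~ true) = f (\rank T) by congr f; exact: addn0.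
  have e1 : f (\rank T + ~~ false) = f (\rank T).+1 by congr f; exact: addn1.
  under eq_bigr => b hb do rewrite G0 hb.
  under [X in _ + X]eq_bigr => b hb do rewrite G0 (negbTE hb).
  rewrite !sumr_const.
  have c1 : forall P : pred 'rV[F]_m, P =1 (fun b => (b <= T)%MS) ->
      #|P| = (#|F| ^ \rank T)%N.
    by move=> P hP; rewrite -card_rowg; apply: eq_card => b; rewrite !inE; exact: hP.
  have c2 : forall P : pred 'rV[F]_m, P =1 (fun b => ~~ (b <= T)%MS) ->
      #|P| = (#|F| ^ m - #|F| ^ \rank T)%N.
    move=> P hP; have -> : (#|F| ^ m = #|{: 'rV[F]_m}|)%N by rewrite card_mx mul1n.
    rewrite -(cardC (fun b : 'rV[F]_m => (b <= T)%MS)) (c1 _ (frefl _)) addKn.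
    by apply: eq_card => b; rewrite !inE; exact: hP.
  have e2 : (\rank T + ~~ true)%N = \rank T := addn0 _.
  have e3 : (\rank T + ~~ false)%N = (\rank T).+1 := addn1 _.
  by rewrite (c1 _ (frefl _)) (c2 _ (frefl _)) e0 e1 e2 e3 hr.
have S1 : \sum_b G b 1 = (if (\rank T < r)%N then mu #|F| (srk T).+1 * f (\rank T).+1 else 0)
       *+ (#|F| ^ (m - srk T)).
  under eq_bigr => b _ do rewrite G1.
  rewrite -big_mkcondr /= sumr_const.
  case: ifP => h; last first.
    rewrite mul0rn (_ : #|_| = 0%N) ?mulr0n //.
    by apply: eq_card0 => b; rewrite unfold_in /= andbF.
  congr (_ *+ _); rewrite /srk -mxrank_ker -card_rowg.
  by apply: eq_card => b; rewrite [RHS]inE unfold_in /= andbT sub_kermx.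
have muS : forall q k, mu q k.+1 = - (mu q k * (q ^ k)%:Z).
  move=> q k; by rewrite /mu binS bin1 expnD PoszM exprS mulN1r mulrA !mulNr.
have hq : (0 < #|F|)%N by apply: ltnW; exact: card_finNzRing_gt1.
have hrk : (\rank T <= m)%N by apply: rank_leq_row.
have hs : (srk T <= m)%N by apply: rank_leq_row.
have eqm : (#|F| ^ m)%N = (#|F| ^ srk T * #|F| ^ (m - srk T))%N by rewrite -expnD subnKC.
rewrite E2 S0 S1 muS; split => h.
  have mn : forall (x : int) n, x *+ n = x * n%:Z by move=> x n; rewrite -mulr_natr natz.
  rewrite h !mn -subzn ?leq_pexp2l // eqm PoszM.
  move: (mu #|F| (srk T)) (f (\rank T)) (f (\rank T).+1) (Posz (#|F| ^ \rank T))
        (Posz (#|F| ^ srk T)) (Posz (#|F| ^ (m - srk T))) => M x y a B C.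
  ring.
rewrite -h ltnn !mul0rn !addr0 -mulr_natr natz.
move: (mu #|F| (srk T)) (f (\rank T)) (Posz (#|F| ^ \rank T)) => M x a.
ring.
Qed.
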